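(* There is a first-order formula $\varphi_r(x,y)$ over binary relation symbols $<,\lhd$ and unary relation symbols $C,Q$ such that for every $n\in\mathbb{N}$ and all $a,b\in[n]$, $([n],<^n,\lhd^n,C^n,Q^n)\models\varphi_r(a,b)$ iff $r(a)=b$.
   Context: $[n]=\{0,1,\dots,n\}$; $<$ is the usual order on $\mathbb{N}$ and $P^n=P\cap[n]^k$ for a $k$-ary relation $P$ on $\mathbb{N}$. Let $q_i=\frac{i(i+1)}{2}$. For $x\in\mathbb{N}$ let $c(x)=\max\{i: q_i\le x\}$, $q(x)=q_{c(x)}$, $r(x)=x-q(x)$. The linear order $\lhd$: $x\lhd y$ iff $r(x)<r(y)$, or $r(x)=r(y)$ and $c(x)<c(y)$. $C=\{x: 2\nmid\lfloor (c(x)+1)/2^{r(x)}\rfloor\}$, $Q=\{x: 2\nmid\lfloor q_{c(x)+1}/2^{r(x)}\rfloor\}$. *)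

(* Defs.v *)
From mathcomp Require Import all_boot.
Set Implicit Arguments. Unset Strict Implicit. Unset Printing Implicit Defensive.

Definition qi (i : nat) : nat := (i * i.+1) %/ 2.
(* c(x) = max { i : q_i <= x }  (any such i satisfies i <= x) *)
Definition cf (x : nat) : nat := \max_(i < x.+1 | qi i <= x) i.
Definition qf (x : nat) : nat := qi (cf x).
Definition rf (x : nat) : nat := x - qf x.

Definition lhd (x y : nat) : bool :=
  (rf x < rf y) || ((rf x == rf y) && (cf x < cf y)).
Definition Cset (x : nat) : bool := odd ((cf x).+1 %/ 2 ^ (rf x)).
Definition Qset (x : nat) : bool := odd (qi (cf x).+1 %/ 2 ^ (rf x)).

Inductive form : Type :=
| FEq  : nat -> nat -> form
| FLt  : nat -> nat -> form
| FLhd : nat -> nat -> form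
| FC   : nat -> form
| FQ   : nat -> form
| FNot : form -> form
| FAnd : form -> form -> form
| FOr  : form -> form -> form
| FEx  : nat -> form -> form
| FAll : nat -> form -> form.

Definition upd (e : nat -> nat) (v m : nat) : nat -> nat :=
  fun i => if i == v then m else e i.

(* Satisfaction in the structure ([n], <^n, <|^n, C^n, Q^n) under an
   assignment e (whose values are assumed to lie in [n]); quantifiers range
   over [n] = {0,...,n}. *)
Fixpoint sat (n : nat) (e : nat -> nat) (f : form) : Prop :=
  match f with
  | FEq i j => e i = e j
  | FLt i j => e i < e j
  | FLhd i j => lhd (e i) (e j)
  | FC i => Cset (e i)
  | FQ i => Qset (e i)
  | FNot g => ~ sat n e g
  | FAnd g h => sat n e g /\ sat n e h
  | FOr g h => sat n e g \/ sat n e h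
  | FEx v g => exists m, m <= n /\ sat n (upd e v m) g
  | FAll v g => forall m, m <= n -> sat n (upd e v m) g
  end.

(* Main.v *)
Require Import Defs.
From mathcomp Require Import all_boot zify.
Set Implicit Arguments. Unset Strict Implicit.

Lemma qiS i : qi i.+1 = qi i + i.+1.
Proof.
rewrite /qi.
have -> : i.+1 * i.+2 = i.+1 * 2 + i * i.+1 by lia.
by rewrite divnMDl // addnC.
Qed.

Lemma qi0 : qi 0 = 0. Proof. by []. Qed.

Lemma qi_lt i j : i < j -> qi i < qi j.
Proof.
elim: j => [//|j IH]; rewrite ltnS leq_eqVlt => /orP [/eqP->|/IH h];
rewrite qiS; lia.
Qed.

Lemma qi_le i j : i <= j -> qi i <= qi j.
Proof. rewrite leq_eqVlt => /orP [/eqP->//|/qi_lt]; lia. Qed.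

Lemma qi_ge i : i <= qi i.
Proof. elim: i => [//|i IH]; rewrite qiS; lia. Qed.

Lemma cf_ex x : exists c, qi c <= x < qi c.+1.
Proof.
elim: x => [|x [c /andP [h1 h2]]]; first by exists 0.
case: (ltnP x.+1 (qi c.+1)) => h.
  by exists c; apply/andP; split; lia.
by exists c.+1; rewrite (qiS c.+1); apply/andP; split; lia.
Qed.

Lemma cf_uniq x c : qi c <= x < qi c.+1 -> cf x = c.
Proof.
move=> /andP [h1 h2]; rewrite /cf; apply/eqP; rewrite eqn_leq; apply/andP; split.
  apply/bigmax_leqP => i /= hi.
  case: (leqP (nat_of_ord i) c) => // hc.
  have := qi_le hc; lia.
have hc : c < x.+1 by have := qi_ge c; lia.
exact: (@leq_bigmax_cond _ (fun i : 'I_x.+1 => qi i <= x) (fun i => nat_of_ord i) (Ordinal hc)).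
Qed.

Lemma cf_spec x : qi (cf x) <= x < qi (cf x).+1.
Proof. by have [c h] := cf_ex x; rewrite (cf_uniq h). Qed.

Lemma rf_le x : rf x <= cf x.
Proof. have := cf_spec x; rewrite /rf /qf qiS; lia. Qed.

Lemma x_decomp x : x = qi (cf x) + rf x.
Proof. have := cf_spec x; rewrite /rf /qf; lia. Qed.

Lemma cf_pair c r : r <= c -> cf (qi c + r) = c.
Proof. move=> h; apply: cf_uniq; rewrite qiS; lia. Qed.

Lemma rf_pair c r : r <= c -> rf (qi c + r) = r.
Proof. move=> h; rewrite /rf /qf cf_pair //; lia. Qed.

Lemma cf_mono x y : x <= y -> cf x <= cf y.
Proof.
move=> h; case: (leqP (cf x) (cf y)) => // hc.
have := cf_spec x; have := cf_spec y; have := qi_le hc; lia.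
Qed.

Definition bit j x := odd (x %/ 2 ^ j).
Definition carry x y j := 2 ^ j <= x %% 2 ^ j + y %% 2 ^ j.

Lemma bit_add x y j : bit j (x + y) = bit j x (+) bit j y (+) carry x y j.
Proof. by rewrite /bit /carry divnD ?expn_gt0 // !oddD oddb. Qed.

Lemma mod2S x j : x %% 2 ^ j.+1 = x %% 2 ^ j + bit j x * 2 ^ j.
Proof.
set d := 2 ^ j.
have dp : 0 < d by rewrite expn_gt0.
have e1 := divn_eq x d.
have e2 := odd_double_half (x %/ d).
rewrite /bit -/d.
set q := x %/ d in e1 e2 *.
set r := x %% d in e1 *.
have hr : r < d by rewrite ltn_mod.
have -> : 2 ^ j.+1 = d * 2 by rewrite expnS mulnC.
have ex : x = q./2 * (d * 2) + (odd q * d + r).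
  rewrite {1}e1 -{1}e2 -!muln2; case: (odd q) => /=; lia.
rewrite {1}ex modnMDl modn_small; first lia.
case: (odd q) => /=; lia.
Qed.

Lemma bit_small x j : x < 2 ^ j -> bit j x = false.
Proof. by move=> h; rewrite /bit divn_small. Qed.

Lemma carry0 x y : carry x y 0 = false.
Proof. by rewrite /carry expn0 !modn1. Qed.

Lemma carryS x y j : carry x y j.+1 =
  (bit j x && bit j y) || ((bit j x || bit j y) && carry x y j).
Proof.
rewrite /carry !mod2S expnS.
have hA : x %% 2 ^ j < 2 ^ j by rewrite ltn_mod expn_gt0.
have hB : y %% 2 ^ j < 2 ^ j by rewrite ltn_mod expn_gt0.
case: (bit j x); case: (bit j y) => /=; apply/idP/idP; lia.
Qed.

Lemma carry_char x y j : carry x y j <->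
  exists i, i < j /\ bit i x /\ bit i y /\
    forall l, i < l -> l < j -> bit l x || bit l y.
Proof.
elim: j => [|j IH]; first by rewrite carry0; split => // [[i [h _]]].
rewrite carryS; split.
  case/orP => [/andP [h1 h2]|/andP [h1 /IH [i [hi [h3 [h4 h5]]]]]].
    exists j; split => //; split => //; split => // l h h'; lia.
  exists i; split; first lia; split => //; split => // l hl hl'.
  case: (ltnP l j) => hlj; first exact: h5.
  by have -> : l = j by lia.
case=> i [hi [h3 [h4 h5]]].
case: (ltnP i j) => hij.
  apply/orP; right; apply/andP; split; first exact: h5.
  apply/IH; exists i; split => //; split => //; split => // l hl hl'.
  apply: h5; lia.
have ej : i = j by lia.
by subst i; rewrite h3 h4.
Qed.

Lemma mod_eq_bits x y L : (forall j, j < L -> bit j x = bit j y) ->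
  x %% 2 ^ L = y %% 2 ^ L.
Proof.
elim: L => [|L IH] h; first by rewrite expn0 !modn1.
rewrite !mod2S IH ?h // => j hj; apply: h; lia.
Qed.

Lemma bits_eq x y L : x < 2 ^ L -> y < 2 ^ L ->
  (forall j, j < L -> bit j x = bit j y) -> x = y.
Proof.
move=> hx hy h; have := mod_eq_bits h; rewrite !modn_small //.
Qed.

Lemma lt_pow2 m : m < 2 ^ m.
Proof. exact: ltn_expl. Qed.

Lemma qi_pow m : qi m.+1 < 2 ^ m.+1.
Proof.
elim: m => [//|m IH]; rewrite (qiS m.+1) (expnS _ m.+1).
have := lt_pow2 m.+1; lia.
Qed.

Lemma cf0 : cf 0 = 0. Proof. exact: (@cf_pair 0 0 isT). Qed.
Lemma rf0 : rf 0 = 0. Proof. exact: (@rf_pair 0 0 isT). Qed.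
Lemma cf1 : cf 1 = 1. Proof. exact: (@cf_pair 1 0 isT). Qed.
Lemma rf1 : rf 1 = 0. Proof. exact: (@rf_pair 1 0 isT). Qed.
Lemma cf2 : cf 2 = 1. Proof. exact: (@cf_pair 1 1 isT). Qed.
Lemma rf2 : rf 2 = 1. Proof. exact: (@rf_pair 1 1 isT). Qed.
Lemma cf3 : cf 3 = 2. Proof. exact: (@cf_pair 2 0 isT). Qed.
Lemma rf3 : rf 3 = 0. Proof. exact: (@rf_pair 2 0 isT). Qed.

Lemma lhdE x y : lhd x y = (rf x < rf y) || ((rf x == rf y) && (cf x < cf y)).
Proof. by []. Qed.

Lemma elem_eq x y : cf x = cf y -> rf x = rf y -> x = y.
Proof. by move=> h1 h2; rewrite (x_decomp x) (x_decomp y) h1 h2. Qed.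

Lemma lt_rows x y : cf x < cf y -> x < y.
Proof.
move=> h; have := cf_spec x; have := cf_spec y; have := qi_le h; lia.
Qed.

Arguments lhd : simpl never.
Arguments rf : simpl never.
Arguments cf : simpl never.
Arguments Cset : simpl never.
Arguments Qset : simpl never.
Arguments upd : simpl never.

Definition env n (e : nat -> nat) := forall i, e i <= n.

Lemma upd_eq e v m : upd e v m v = m.
Proof. by rewrite /upd eqxx. Qed.
Lemma upd_neq e v m i : i <> v -> upd e v m i = e i.
Proof. by move=> h; rewrite /upd; case: eqP. Qed.
Lemma env_upd n e v m : env n e -> m <= n -> env n (upd e v m).
Proof. by move=> h hm i; rewrite /upd; case: eqP. Qed.

Ltac U := repeat (rewrite upd_eq || (rewrite upd_neq; [|lia])).

Definition FImp f g := FOr (FNot f) g.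
Definition FLe i j := FOr (FLt i j) (FEq i j).
Definition FXor f g := FOr (FAnd f (FNot g)) (FAnd (FNot f) g).
Definition FIff f g := FAnd (FImp f g) (FImp g f).

Definition Inc z k := FAll k (FAll k.+1 (FImp (FAnd (FLhd k k.+1)
   (FOr (FLhd k.+1 z) (FEq k.+1 z))) (FLt k k.+1))).
Definition Two z k := FEx k (FEx k.+1 (FAnd (FLt k k.+1) (FAnd (FLt k.+1 z)
   (FAll k.+2 (FImp (FLt k.+2 z) (FOr (FEq k.+2 k) (FEq k.+2 k.+1))))))).
Definition Mx z k := FAll k (FNot (FLt z k)).
Definition R0 z k := FAnd (Inc z k) (FNot (FAnd (Mx z k) (Two z k))).

Lemma sat_Inc n e z k : env n e -> z < k -> 3 <= n \/ n <= 1 ->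
  (sat n e (Inc z k) <-> rf (e z) = 0).
Proof.
move=> he hz hn; rewrite /Inc /FImp /=; split.
  move=> H; apply/eqP; rewrite -leqn0 leqNgt; apply/negP => hr.
  case: hn => hn.
    have := H 3 hn 2 (leq_trans (isT : 2 <= 3) hn); U.
    case; last by [].
    case; split; first by rewrite lhdE rf3 rf2.
    have hle := rf_le (e z).
    rewrite lhdE rf2 cf2.
    case: (ltnP 1 (rf (e z))) => h1; first by left.
    have h1' : rf (e z) = 1 by lia.
    case: (ltnP 1 (cf (e z))) => h2; first by left; apply/orP; right; apply/andP; split; [apply/eqP|]; lia.
    right; apply: elem_eq; rewrite ?cf2 ?rf2; lia.
  have hez := he z; have : e z = 0 \/ e z = 1 by lia.
  by case=> h; move: hr; rewrite h ?rf0 ?rf1.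
move=> hr m hm m0 hm0; U.
case: (ltnP m m0) => hl; first by right.
left; case; rewrite !lhdE => h1 h2.
have hr0 : rf m0 = 0.
  case: h2 => [h2|->]; last by [].
  move: h2; rewrite hr; case/orP => //; lia.
move: h1; rewrite hr0; case/orP => //= /andP [/eqP h3 h4].
have := lt_rows h4; lia.
Qed.

Lemma sat_Mx n e z k : env n e -> z < k -> (sat n e (Mx z k) <-> e z = n).
Proof.
move=> he hz; rewrite /Mx /=; split.
  move=> H; have := H n (leqnn n); U; have := he z; lia.
by move=> h m hm; U; lia.
Qed.

Lemma sat_Two n e z k : env n e -> z < k -> (sat n e (Two z k) <-> e z = 2).
Proof.
move=> he hz; rewrite /Two /FImp /=; split.
  case=> m [hm [m0 [hm0]]]; U; case=> h1 [h2 H].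
  case: (ltnP 2 (e z)) => h3; last lia. have hez := he z.
  have H0 := H 0 (leq0n n); have H1 := H 1 ltac:(lia); have H2 := H 2 ltac:(lia).
  move: H0 H1 H2; U; lia.
move=> h; have hz2 := he z.
exists 0; split=> //; exists 1; split; first lia.
U; split=> //; split; first lia.
move=> m1 hm1; U.
case: (ltnP m1 2) => h1; [right|left]; lia.
Qed.

Lemma lhd_small m m0 : m <= 2 -> m0 <= 2 -> lhd m m0 -> m < m0.
Proof.
move=> h1 h2; have : m = 0 \/ m = 1 \/ m = 2 by lia.
have : m0 = 0 \/ m0 = 1 \/ m0 = 2 by lia.
by do 2 (case=> [->|[->|->]]); rewrite lhdE ?rf0 ?rf1 ?rf2 ?cf0 ?cf1 ?cf2.
Qed.

Lemma R0_unf n e z k : sat n e (R0 z k) <->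
  sat n e (Inc z k) /\ ~ (sat n e (Mx z k) /\ sat n e (Two z k)).
Proof. by []. Qed.

Lemma sat_R0 n e z k : env n e -> z < k -> (sat n e (R0 z k) <-> rf (e z) = 0).
Proof.
move=> he hz; rewrite R0_unf.
have hez := he z.
case: (eqVneq n 2) => hn.
  subst n; rewrite sat_Mx // sat_Two //.
  have Hinc : sat 2 e (Inc z k).
    rewrite /Inc /FImp /= => m hm m0 hm0; U.
    case: (ltnP m m0) => h; first by right.
    by left; case=> /lhd_small; lia.
  have : e z = 0 \/ e z = 1 \/ e z = 2 by lia.
  by case=> [->|[->|->]]; rewrite ?rf0 ?rf1 ?rf2; (split; [case=> _; lia | move=> h0; split=> //; lia]).
rewrite sat_Inc //; last lia.
rewrite sat_Mx // sat_Two //.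
split; first by case.
by move=> h; split => // [[h1 h2]]; move: hn; rewrite -h1 h2.
Qed.

Arguments R0 : simpl never.
Definition SameRow x y k := FAll k (FImp (R0 k k.+1)
  (FAnd (FNot (FAnd (FLt x k) (FLe k y))) (FNot (FAnd (FLt y k) (FLe k x))))).
Arguments SameRow : simpl never.

Lemma rf_qi c : rf (qi c) = 0.
Proof. by have := @rf_pair c 0 (leq0n c); rewrite addn0. Qed.
Lemma cf_qi c : cf (qi c) = c.
Proof. by have := @cf_pair c 0 (leq0n c); rewrite addn0. Qed.

Lemma rowstart_between x m y : rf m = 0 -> x < m -> m <= y -> cf x < cf y.
Proof.
move=> hm h1 h2.
have c1 := cf_mono (ltnW h1); have c2 := cf_mono h2.
have hm' := x_decomp m; rewrite hm addn0 in hm'.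
case: (ltnP (cf x) (cf m)) => h; first lia.
have ee : cf x = cf m by lia.
have := cf_spec x; rewrite ee; lia.
Qed.

Lemma sat_SameRow n e x y k : env n e -> x < k -> y < k ->
  (sat n e (SameRow x y k) <-> cf (e x) = cf (e y)).
Proof.
move=> he hx hy; rewrite /SameRow /FImp /FLe; cbn -[R0 leq].
split.
  move=> H; apply/eqP; rewrite eqn_leq; apply/andP; split; rewrite leqNgt; apply/negP => hc.
    have hm : qi (cf (e x)) <= n by have := cf_spec (e x); have := he x; lia.
    case: (H _ hm); U.
      by rewrite sat_R0 ?upd_eq //; [rewrite rf_qi | exact: env_upd].
    case=> _ H2; apply: H2; split; last by have := cf_spec (e x); lia.
    apply: lt_rows; rewrite cf_qi; lia.
  have hm : qi (cf (e y)) <= n by have := cf_spec (e y); have := he y; lia.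
  case: (H _ hm); U.
    by rewrite sat_R0 ?upd_eq //; [rewrite rf_qi | exact: env_upd].
  case=> H1 _; apply: H1; split; last by have := cf_spec (e y); lia.
  apply: lt_rows; rewrite cf_qi; lia.
move=> hc m hm.
have he' := env_upd k he hm.
rewrite sat_R0 //; U.
case: (eqVneq (rf m) 0) => hr; last by left; apply/eqP.
right; split; move=> [h1 h2].
  have h2' : m <= e y by case: h2 => h2; [exact: ltnW h2| rewrite h2].
  by have := rowstart_between hr h1 h2'; lia.
have h2' : m <= e x by case: h2 => h2; [exact: ltnW h2| rewrite h2].
by have := rowstart_between hr h1 h2'; lia.
Qed.

Definition Pre x y k := FAnd (FLhd x y) (FAnd (FLt x y) (FAnd (FNot (SameRow x y k))
  (FNot (FEx k (FAnd (FLhd x k) (FAnd (FLhd k y) (SameRow k y k.+1))))))).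
Arguments Pre : simpl never.

Lemma sat_Pre n e x y k : env n e -> x < k -> y < k ->
  (sat n e (Pre x y k) <-> rf (e x) = rf (e y) /\ cf (e x) < cf (e y)).
Proof.
move=> he hx hy; rewrite /Pre; cbn -[SameRow leq].
rewrite sat_SameRow //.
split.
  case=> hl [hlt [hr H]].
  have hc : cf (e x) < cf (e y).
    have := cf_mono (ltnW hlt); lia.
  move: hl; rewrite lhdE; case/orP => [h1|/andP [/eqP h1 h2]]; last by [].
  exfalso; apply: H.
  have hrx := rf_le (e x).
  have hz : qi (cf (e y)) + rf (e x) <= n.
    have := x_decomp (e y); have := he y; lia.
  exists (qi (cf (e y)) + rf (e x)); split => //.
  have he' := env_upd k he hz.
  rewrite sat_SameRow //; try lia; U.
  rewrite !lhdE rf_pair ?cf_pair; try lia.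
case=> hr hc; split; first by rewrite lhdE hr eqxx hc orbT.
split; first exact: lt_rows.
split; first lia.
case=> m [hm]; have he' := env_upd k he hm.
rewrite sat_SameRow //; try lia; U.
rewrite !lhdE; case=> h1 [h2 h3].
lia.
Qed.

Definition SameCol x y k := FOr (FEq x y) (FOr (Pre x y k) (Pre y x k)).
Arguments SameCol : simpl never.

Lemma sat_SameCol n e x y k : env n e -> x < k -> y < k ->
  (sat n e (SameCol x y k) <-> rf (e x) = rf (e y)).
Proof.
move=> he hx hy; rewrite /SameCol; cbn -[Pre].
rewrite !sat_Pre //.
split; first by case=> [->|[[h _]|[h _]]].
move=> h.
case: (ltngtP (cf (e x)) (cf (e y))) => hc.
- by right; left.
- by right; right.
- by left; apply: elem_eq.
Qed.

Definition Diag d k := FNot (FEx k (FAnd (FLhd k d) (SameCol k d k.+1))).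
Arguments Diag : simpl never.

Lemma sat_Diag n e d k : env n e -> d < k ->
  (sat n e (Diag d k) <-> rf (e d) = cf (e d)).
Proof.
move=> he hd; rewrite /Diag; cbn -[SameCol leq].
have hle := rf_le (e d).
split.
  move=> H; case: (ltnP (rf (e d)) (cf (e d))) => h; last lia.
  exfalso; apply: H.
  have hm : qi (rf (e d)) + rf (e d) <= n.
    have := x_decomp (e d); have := qi_le hle; have := he d; lia.
  exists (qi (rf (e d)) + rf (e d)); split => //.
  have he' := env_upd k he hm.
  rewrite sat_SameCol //; try lia; U.
  rewrite lhdE rf_pair ?cf_pair //; lia.
move=> h [m [hm]]; have he' := env_upd k he hm.
rewrite sat_SameCol //; try lia; U.
rewrite lhdE => [[h1 h2]]; have := rf_le m; lia.
Qed.

Lemma bit_big x c j : x < 2 ^ c.+1 -> c < j -> bit j x = false.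
Proof.
move=> h1 h2; apply: bit_small; apply: (leq_trans h1).
by rewrite leq_exp2l.
Qed.

Definition BitC w z k := FEx k (FAnd (SameRow k w k.+1) (FAnd (SameCol k z k.+1) (FC k))).
Definition BitQ w z k := FEx k (FAnd (SameRow k w k.+1) (FAnd (SameCol k z k.+1) (FQ k))).
Arguments BitC : simpl never.
Arguments BitQ : simpl never.

Lemma sat_BitC n e w z k : env n e -> w < k -> z < k ->
  qi (cf (e w)) + cf (e w) <= n ->
  (sat n e (BitC w z k) <-> bit (rf (e z)) (cf (e w)).+1).
Proof.
move=> he hw hz hrow; rewrite /BitC; cbn -[SameCol SameRow leq].
split.
  case=> m [hm]; have he' := env_upd k he hm.
  rewrite sat_SameRow // ?sat_SameCol //; try lia; U.
  by case=> h1 [h2 h3]; move: h3; rewrite /Cset h1 h2.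
move=> hb.
have hj : rf (e z) <= cf (e w).
  case: (leqP (rf (e z)) (cf (e w))) => // h.
  by move: hb; rewrite (bit_big (c:=cf (e w))) // lt_pow2.
have hm : qi (cf (e w)) + rf (e z) <= n by lia.
exists (qi (cf (e w)) + rf (e z)); split => //.
have he' := env_upd k he hm.
rewrite sat_SameRow // ?sat_SameCol //; try lia; U.
by rewrite /Cset !cf_pair // !rf_pair.
Qed.

Lemma sat_BitQ n e w z k : env n e -> w < k -> z < k ->
  qi (cf (e w)) + cf (e w) <= n ->
  (sat n e (BitQ w z k) <-> bit (rf (e z)) (qi (cf (e w)).+1)).
Proof.
move=> he hw hz hrow; rewrite /BitQ; cbn -[SameCol SameRow leq].
split.
  case=> m [hm]; have he' := env_upd k he hm.
  rewrite sat_SameRow // ?sat_SameCol //; try lia; U.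
  by case=> h1 [h2 h3]; move: h3; rewrite /Qset h1 h2.
move=> hb.
have hj : rf (e z) <= cf (e w).
  case: (leqP (rf (e z)) (cf (e w))) => // h.
  by move: hb; rewrite (bit_big (c:=cf (e w))) // qi_pow.
have hm : qi (cf (e w)) + rf (e z) <= n by lia.
exists (qi (cf (e w)) + rf (e z)); split => //.
have he' := env_upd k he hm.
rewrite sat_SameRow // ?sat_SameCol //; try lia; U.
by rewrite /Qset !cf_pair // !rf_pair.
Qed.

Definition PrevRow w b k := FAnd (FLt w b) (FAnd (FNot (SameRow w b k))
  (FAll k (FImp (FAnd (FLt w k) (FLt k b)) (SameRow k b k.+1)))).
Arguments PrevRow : simpl never.

Lemma cf_prev c : 0 < c -> cf (qi c).-1 = c.-1.
Proof.
move=> hc; apply: cf_uniq.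
have -> : c.-1.+1 = c by lia.
have := qiS c.-1; have -> : c.-1.+1 = c by lia.
lia.
Qed.

Lemma sat_PrevRow n e w b k : env n e -> w < k -> b < k ->
  (sat n e (PrevRow w b k) <-> 0 < cf (e b) /\ (e w).+1 = qi (cf (e b))).
Proof.
move=> he hw hb; rewrite /PrevRow /FImp; cbn -[SameRow leq].
rewrite sat_SameRow //.
have hsb := cf_spec (e b); have hsw := cf_spec (e w).
split.
  case=> h1 [h2 H].
  have hc : cf (e w) < cf (e b) by have := cf_mono (ltnW h1); lia.
  have hwl : e w < qi (cf (e b)) by have := qi_le hc; lia.
  split; first lia.
  case: (ltnP (e w).+1 (qi (cf (e b)))) => h3; last lia.
  have hm : (qi (cf (e b))).-1 <= n by have := he b; lia.
  case: (H _ hm); U.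
    case; split; lia.
  have he' := env_upd k he hm.
  rewrite sat_SameRow //; try lia; U.
  rewrite cf_prev; lia.
case=> h1 h2.
split; first lia.
split.
  have -> : e w = (qi (cf (e b))).-1 by lia.
  rewrite cf_prev; lia.
move=> m hm; have he' := env_upd k he hm.
rewrite sat_SameRow //; try lia; U.
case: (ltnP (e w) m) => h3; last by left; case; lia.
case: (ltnP m (e b)) => h4; last by left; case; lia.
right; apply: cf_uniq; lia.
Qed.

Definition XQ b z k := FEx k (FAnd (PrevRow k b k.+1) (BitQ k z k.+1)).
Arguments XQ : simpl never.

Lemma sat_XQ n e b z k : env n e -> b < k -> z < k ->
  (sat n e (XQ b z k) <-> bit (rf (e z)) (qi (cf (e b)))).
Proof.
move=> he hb hz; rewrite /XQ; cbn -[PrevRow BitQ leq].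
split.
  case=> m [hm]; have he' := env_upd k he hm.
  rewrite sat_PrevRow //; try lia; U.
  case=> [[h1 h2] h3].
  have hcm : cf m = (cf (e b)).-1 by rewrite -(cf_prev h1) -h2.
  move: h3; rewrite sat_BitQ //; try lia; U.
    by rewrite hcm; have -> : (cf (e b)).-1.+1 = cf (e b) by lia.
  rewrite hcm; have := qiS (cf (e b)).-1; have -> : (cf (e b)).-1.+1 = cf (e b) by lia.
  lia.
move=> hbit.
have hc : 0 < cf (e b).
  case: (posnP (cf (e b))) => // h; move: hbit; by rewrite h qi0 /bit div0n.
have hq := qi_lt hc; rewrite qi0 in hq.
have hsb := cf_spec (e b); have hbn := he b.
have hm : (qi (cf (e b))).-1 <= n by lia.
exists (qi (cf (e b))).-1; split => //.
have he' := env_upd k he hm.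
rewrite sat_PrevRow // ?sat_BitQ //; try lia; U.
  split; first lia.
  by rewrite cf_prev // ; have -> : (cf (e b)).-1.+1 = cf (e b) by lia.
rewrite cf_prev //; have := qiS (cf (e b)).-1; have -> : (cf (e b)).-1.+1 = cf (e b) by lia.
lia.
Qed.

Lemma diag_dec u : rf u = cf u -> u = qi (rf u) + rf u.
Proof. by move=> h; rewrite {1}(x_decomp u) h. Qed.

Lemma dg_lt i j : i < j -> qi i + i < qi j + j.
Proof. move=> h; have := qi_lt h; lia. Qed.

Lemma diag_lt u v : rf u = cf u -> rf v = cf v -> (u < v <-> rf u < rf v).
Proof.
move=> hu hv; rewrite (diag_dec hu) (diag_dec hv) !rf_pair //; try lia.
split => h; last exact: dg_lt.
case: (ltnP (rf u) (rf v)) => // h'.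
have := qi_le h'; lia.
Qed.

Definition Carry b db z k := FEx k (FAnd (Diag k k.+1) (FAnd (FLt k z)
  (FAnd (XQ b k k.+1) (FAnd (BitC db k k.+1)
  (FAll k.+1 (FImp (FAnd (Diag k.+1 k.+2) (FAnd (FLt k k.+1) (FLt k.+1 z)))
     (FOr (XQ b k.+1 k.+2) (BitC db k.+1 k.+2)))))))).
Arguments Carry : simpl never.

Lemma sat_Carry n e b db z k : env n e -> b < k -> db < k -> z < k ->
  rf (e db) = cf (e db) -> rf (e z) = cf (e z) ->
  (sat n e (Carry b db z k) <->
   carry (qi (cf (e b))) (cf (e db)).+1 (rf (e z))).
Proof.
move=> he hb hdb hz hddb hdz; rewrite /Carry /FImp; cbn -[Diag XQ BitC leq].
have hrow : qi (cf (e db)) + cf (e db) <= n.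
  by have := he db; rewrite {1}(diag_dec hddb) hddb.
rewrite carry_char.
have hzn := he z.
split.
  case=> m [hm]; have he' := env_upd k he hm.
  rewrite sat_Diag ?sat_XQ ?sat_BitC //; U; try lia.
  case=> h1 [h2 [h3 [h4 H]]].
  exists (rf m); split; first by rewrite -(diag_lt h1 hdz).
  split => //; split => //.
  move=> l hl1 hl2.
  have hln : qi l + l <= n.
    have := dg_lt hl2; rewrite -(diag_dec hdz); lia.
  have := H _ hln; have he'' := env_upd k.+1 he' hln.
  rewrite sat_Diag ?sat_XQ ?sat_BitC //; U; try lia.
  rewrite rf_pair ?cf_pair //.
  case; last by case=> ->; rewrite ?orbT.
  case; split => //; split.
    by rewrite (diag_dec h1); apply: dg_lt.
  by rewrite (diag_dec hdz); apply: dg_lt.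
case=> i [hi [h3 [h4 H]]].
have hin : qi i + i <= n.
  have := dg_lt hi; rewrite -(diag_dec hdz); lia.
exists (qi i + i); split => //; have he' := env_upd k he hin.
rewrite sat_Diag ?sat_XQ ?sat_BitC //; U; try lia.
rewrite rf_pair ?cf_pair //.
split => //; split; first by rewrite (diag_dec hdz); apply: dg_lt.
split => //; split => //.
move=> m hm; have he'' := env_upd k.+1 he' hm.
rewrite sat_Diag ?sat_XQ ?sat_BitC //; U; try lia.
case: (eqVneq (rf m) (cf m)) => hdm; last by left; case=> h _; rewrite h eqxx in hdm.
case: (ltnP (qi i + i) m) => h1; last by left; case=> _ [];lia.
case: (ltnP m (e z)) => h2; last by left; case=> _ []; lia.
right.
have hd0 : rf (qi i + i) = cf (qi i + i) by rewrite rf_pair ?cf_pair.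
have hdm' := hdm.
have hi1 : i < rf m.
  by have := (diag_lt hd0 hdm'); rewrite rf_pair // => [[+ _]]; apply.
have hi2 : rf m < rf (e z) by apply/(diag_lt hdm' hdz).
by case/orP: (H _ hi1 hi2) => h; [left|right].
Qed.

From Stdlib Require Import Classical.

Lemma sat_xor n e f g (u v : bool) : (sat n e f <-> u) -> (sat n e g <-> v) ->
  (sat n e (FXor f g) <-> u (+) v).
Proof.
move=> h1 h2; rewrite /FXor /=; rewrite h1 h2.
by case: u h1; case: v h2 => h2 h1; split => //=; intuition.
Qed.

Lemma sat_iffF n e f g : sat n e (FIff f g) <-> (sat n e f <-> sat n e g).
Proof.
rewrite /FIff /FImp /=; split.
  by case=> [[h1|h1] [h2|h2]]; split => // h; exfalso; auto.
case=> h1 h2; split.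
  by case: (classic (sat n e f)) => h; [right; auto | left].
by case: (classic (sat n e g)) => h; [right; auto | left].
Qed.

Definition SumBit b db z k := FXor (FXor (XQ b z k) (BitC db z k)) (Carry b db z k).
Arguments SumBit : simpl never.

Lemma sat_SumBit n e b db z k : env n e -> b < k -> db < k -> z < k ->
  rf (e db) = cf (e db) -> rf (e z) = cf (e z) ->
  (sat n e (SumBit b db z k) <-> bit (rf (e z)) (qi (cf (e b)) + (cf (e db)).+1)).
Proof.
move=> he hb hdb hz hddb hdz.
have hrow : qi (cf (e db)) + cf (e db) <= n.
  by have := he db; rewrite {1}(diag_dec hddb) hddb.
rewrite bit_add /SumBit; apply: sat_xor; last exact: sat_Carry.
apply: sat_xor; first exact: sat_XQ.
exact: sat_BitC.
Qed.

Definition Main := FEx 2 (FEx 3 (FAnd (Diag 2 5) (FAnd (SameCol 2 0 5)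
  (FAnd (Diag 3 5) (FAnd (SameCol 3 1 5) (FAnd (FLe 1 2)
  (FAll 4 (FImp (Diag 4 5) (FIff (SumBit 1 3 4 5) (BitC 2 4 5)))))))))).

Theorem lemma3p6 :
  exists phi : form,
    forall (n a b : nat), a <= n -> b <= n ->
      forall e : nat -> nat, (forall i, e i <= n) -> e 0 = a -> e 1 = b ->
        (sat n e phi <-> rf a = b).
Proof.
exists Main => n a b ha hb e he ea eb.
rewrite /Main /FImp /FLe; cbn -[Diag SameCol SumBit BitC FIff leq].
have hca := cf_spec a; have hra := rf_le a; have hdeca := x_decomp a.
have hcb := cf_spec b; have hrb := rf_le b; have hdecb := x_decomp b.
split.
  case=> da [hda [db [hdb]]].
  have he1 := env_upd 2 he hda; have he2 := env_upd 3 he1 hdb.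
  rewrite sat_Diag ?sat_SameCol ?sat_Diag ?sat_SameCol //; U; try lia.
  rewrite ea eb.
  case=> h1 [h2 [h3 [h4 [h5 H]]]].
  have eda := diag_dec h1; have edb := diag_dec h3.
  set K := rf a in h2.
  have hK : rf da = K by [].
  have hcda : cf da = K by rewrite -h1.
  have hs : cf db = rf b by rewrite -h3.
  have hsum : qi (cf b) + (cf db).+1 = K.+1.
    apply: (@bits_eq _ _ K.+1).
    - have := qi_pow K; rewrite qiS.
      have : b <= qi K + K by rewrite -hK -eda; case: h5 => h5; lia.
      rewrite hs; lia.
    - exact: lt_pow2.
    move=> j hj.
    have hjn : qi j + j <= n.
      have hdan := hda.
      have : qi j + j <= qi K + K by have := qi_le (hj : j <= K); lia.
      rewrite -hK -eda; lia.
    have he3 := env_upd 4 he2 hjn.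
    case: (H _ hjn).
      rewrite sat_Diag //; U; by rewrite rf_pair ?cf_pair.
    rewrite sat_iffF sat_SumBit ?sat_BitC //; U; try lia;
      rewrite ?rf_pair ?cf_pair //; try lia.
      by rewrite eb hcda => hh; apply/idP/idP => /hh.
    by rewrite hcda -hK -eda.
  have : K = rf a by [].
  lia.
move=> hrab.
have hKn : qi (rf a) + (rf a) <= n by have := qi_le hra; lia.
exists (qi (rf a) + (rf a)); split => //.
have hdbn : qi (rf b) + rf b <= n by have := qi_le hrb; lia.
exists (qi (rf b) + rf b); split => //.
have he1 := env_upd 2 he hKn; have he2 := env_upd 3 he1 hdbn.
rewrite sat_Diag ?sat_SameCol ?sat_Diag ?sat_SameCol //; U; try lia.
rewrite ea eb !rf_pair ?cf_pair //.
split => //; split => //; split => //; split => //.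
split; first lia.
move=> m hm; have he3 := env_upd 4 he2 hm.
rewrite sat_Diag //; U.
case: (eqVneq (rf m) (cf m)) => hdm; last by left; move=> h; rewrite h eqxx in hdm.
right.
rewrite sat_iffF sat_SumBit ?sat_BitC //; U; try lia;
  rewrite ?rf_pair ?cf_pair //; try lia.
rewrite eb; have -> : qi (cf b) + (rf b).+1 = (rf a).+1 by lia.
by [].
Qed.
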